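(* For every alphabet $\Sigma$, $\mathrm{RevL}(\mathbb{F}_2,\Sigma)$ equals the Boolean closure of $\mathrm{RevL}(\mathbb{B},\Sigma)$, i.e., the smallest set of languages over $\Sigma$ containing $\mathrm{RevL}(\mathbb{B},\Sigma)$ and closed under complementation in $\Sigma^*$, finite unions and finite intersections. In other words, the class $\mathrm{RevL}(\mathbb{F}_2)$ is the Boolean closure of $\mathrm{RevL}(\mathbb{B})$.
   Context: $\mathbb{F}_2$ is the two-element field and $\mathbb{B}=(\{0,1\},\lor,\land,0,1)$ the Boolean semiring. For a semiring $S$ and finite nonempty alphabet $\Sigma$, a series is a map $r\colon\Sigma^*\to S$ with value $(r,w)$ and support $\mathrm{supp}(r)=\{w\mid(r,w)\neq0\}$. A weighted automaton over $S$ and $\Sigma$ is $\mathcal{A}=(Q,\sigma,\iota,\tau)$ with $Q$ finite, $\sigma\colon Q\times\Sigma\times Q\to S$, $\iota,\tau\colon Q\to S$; a run on $w=a_1\cdots a_t$ is $q_0a_1q_1\cdots a_tq_t$ with all $\sigma(q_{k-1},a_k,q_k)\neq0$, of weight $\iota(q_0)\sigma(q_0,a_1,q_1)\cdots\sigma(q_{t-1},a_t,q_t)\tau(q_t)$, and $(\|\mathcal{A}\|,w)$ is the sum of weights of all runs on $w$. $\mathcal{A}$ is reversible if for all $p,p',q,q'\in Q$, $a\in\Sigma$: $\sigma(p,a,q)\neq0\neq\sigma(p,a,q')$ implies $q=q'$, and $\sigma(p,a,q)\neq0\neq\sigma(p',a,q)$ implies $p=p'$. $\mathrm{RevL}(S,\Sigma)$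 is the set of supports of series realised by reversible weighted automata over $S$ and $\Sigma$, and $\mathrm{RevL}(S)$ the class of all such languages over all alphabets. $\mathrm{RevL}(\mathbb{B},\Sigma)$ is exactly the set of languages recognised by reversible finite automata in the sense of Pin (transition relation deterministic and codeterministic, arbitrary sets of initial and final states). *)

(* Defs.v *)
From HB Require Import structures.
From mathcomp Require Import all_boot all_algebra.
Set Implicit Arguments. Unset Strict Implicit. Unset Printing Implicit Defensive.

Record wautomaton (S : Type) (Sigma : finType) := WAut {
  wa_Q : finType;
  wa_sigma : wa_Q -> Sigma -> wa_Q -> S;
  wa_iota : wa_Q -> S;
  wa_tau : wa_Q -> S }.
Arguments wa_sigma {S Sigma} w _ _ _.
Arguments wa_iota {S Sigma} w _.
Arguments wa_tau {S Sigma} w _.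

Section WA.
Variables (S : eqType) (add mul : S -> S -> S) (zero one : S) (Sigma : finType).

Definition is_run (A : wautomaton S Sigma) (w : seq Sigma)
  (f : {ffun 'I_(size w).+1 -> wa_Q A}) : bool :=
  [forall k : 'I_(size w),
     wa_sigma A (f (inord k)) (tnth (in_tuple w) k) (f (inord k.+1)) != zero].

Definition run_weight (A : wautomaton S Sigma) (w : seq Sigma)
  (f : {ffun 'I_(size w).+1 -> wa_Q A}) : S :=
  mul (mul (wa_iota A (f ord0))
           (\big[mul/one]_(k < size w)
               wa_sigma A (f (inord k)) (tnth (in_tuple w) k) (f (inord k.+1))))
      (wa_tau A (f ord_max)).

Definition behaviour (A : wautomaton S Sigma) (w : seq Sigma) : S :=
  \big[add/zero]_(f : {ffun 'I_(size w).+1 -> wa_Q A} | is_run f) run_weight f.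

Definition reversible (A : wautomaton S Sigma) : Prop :=
  (forall p q q' a, wa_sigma A p a q != zero -> wa_sigma A p a q' != zero -> q = q')
  /\ (forall p p' q a, wa_sigma A p a q != zero -> wa_sigma A p' a q != zero -> p = p').

Definition language := seq Sigma -> bool.

Definition RevL (L : language) : Prop :=
  exists A : wautomaton S Sigma, reversible A /\
    forall w, L w = (behaviour A w != zero).
End WA.

Inductive bool_closure (Sigma : finType) (C : language Sigma -> Prop)
  : language Sigma -> Prop :=
| bc_base L : C L -> bool_closure C L
| bc_compl L : bool_closure C L -> bool_closure C (fun w => ~~ L w)
| bc_empty : bool_closure C (fun _ => false)
| bc_full : bool_closure C (fun _ => true)
| bc_union L1 L2 : bool_closure C L1 -> bool_closure C L2 ->
    bool_closure C (fun w => L1 w || L2 w)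
| bc_inter L1 L2 : bool_closure C L1 -> bool_closure C L2 ->
    bool_closure C (fun w => L1 w && L2 w).

Definition RevL_F2 (Sigma : finType) : language Sigma -> Prop :=
  @RevL 'F_2 (fun x y => x + y)%R (fun x y => x * y)%R 0%R 1%R Sigma.
Definition RevL_B (Sigma : finType) : language Sigma -> Prop :=
  @RevL bool orb andb false true Sigma.

(* Main.v *)
Require Import Defs.
From mathcomp Require Import all_boot all_algebra.
From Stdlib Require Import FunctionalExtensionality.
Set Implicit Arguments. Unset Strict Implicit. Unset Printing Implicit Defensive.
Import GRing.Theory.
Local Open Scope ring_scope.

Lemma F2cases (x : 'F_2) : x = 0%R \/ x = 1%R.
Proof. case: x => [[|[|n]] H]; [left|right|]; try by apply/val_inj. by []. Qed.

Lemma F2ne0 (x : 'F_2) : x != 0%R -> x = 1%R.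
Proof. by case: (F2cases x) => ->; rewrite ?eqxx. Qed.

Lemma F2b (b : bool) : ((b%:R : 'F_2) != 0%R) = b.
Proof. by case: b; rewrite ?eqxx ?oner_eq0. Qed.

Lemma F2nat n : ((n%:R : 'F_2) != 0%R) = odd n.
Proof.
elim: n => [|n IH]; first by rewrite eqxx.
rewrite mulrSr /= -IH.
by case: (F2cases (n%:R)) => ->; rewrite ?add0r ?oner_eq0 ?eqxx.
Qed.

Lemma forall_andb (T : finType) (P Q : pred T) :
  [forall x, P x && Q x] = [forall x, P x] && [forall x, Q x].
Proof.
apply/forallP/andP => [H|[/forallP H1 /forallP H2] x].
  by split; apply/forallP => x; case/andP: (H x).
by rewrite H1 H2.
Qed.

Lemma inord0 n : inord 0 = ord0 :> 'I_n.+1.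
Proof. by apply/val_inj; rewrite /= inordK. Qed.

Local Close Scope ring_scope.
Section BNFA.
Variable Sigma : finType.

Record bnfa := BN { bQ : finType; bstep : bQ -> Sigma -> bQ -> bool;
  binit : bQ -> bool; bfin : bQ -> bool }.

Definition brun (N : bnfa) (w : seq Sigma) (f : {ffun 'I_(size w).+1 -> bQ N}) : bool :=
  [forall k : 'I_(size w), bstep (f (inord k)) (tnth (in_tuple w) k) (f (inord k.+1))].
Definition bacc N w (f : {ffun 'I_(size w).+1 -> bQ N}) :=
  [&& brun f, @binit N (f ord0) & @bfin N (f ord_max)].
Definition accs N w := [set f | @bacc N w f].
Arguments accs : clear implicits.
Definition brev (N : bnfa) : Prop :=
  (forall p q q' a, @bstep N p a q -> @bstep N p a q' -> q = q') /\
  (forall p p' q a, @bstep N p a q -> @bstep N p' a q -> p = p').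
Definition OddL (L : language Sigma) :=
  exists N, brev N /\ forall w, L w = odd #|accs N w|.
Definition ExL (L : language Sigma) :=
  exists N, brev N /\ forall w, L w = (0 < #|accs N w|).

Lemma run_det N w (f g : {ffun 'I_(size w).+1 -> bQ N}) :
  (forall p q q' a, @bstep N p a q -> @bstep N p a q' -> q = q') ->
  brun f -> brun g -> f ord0 = g ord0 -> f = g.
Proof.
move=> det /forallP rf /forallP rg e0.
have H : forall k, k <= size w -> f (inord k) = g (inord k).
  elim=> [|k IH] hk; first by rewrite inord0.
  have sf := rf (Ordinal hk); have sg := rg (Ordinal hk).
  rewrite IH in sf; last exact: ltnW.
  exact: det sf sg.
apply/ffunP => i; rewrite -(inord_val i); apply: H; by rewrite -ltnS.
Qed.

Definition Np N p := @BN (bQ N) (@bstep N) (fun q => q == p) (@bfin N).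
Arguments Np : clear implicits.

Lemma card_start N w p : brev N -> #|accs (Np N p) w| <= 1.
Proof.
move=> [det _].
case: (set_0Vmem (accs (Np N p) w)) => [->|[f Hf]]; first by rewrite cards0.
have -> : accs (Np N p) w = [set f]; last by rewrite cards1.
apply/eqP; rewrite eqEsubset sub1set Hf andbT; apply/subsetP => g Hg.
rewrite inE; apply/eqP.
move: Hf Hg; rewrite !inE /bacc => /and3P [rf /eqP ef _] /and3P [rg /eqP eg _].
apply: (run_det det rg rf); by rewrite ef eg.
Qed.

Lemma card_partition N w : #|accs N w| = \sum_(p | @binit N p) #|accs (Np N p) w|.
Proof.
rewrite -sum1_card (partition_big (fun f : {ffun 'I_(size w).+1 -> bQ N} => f ord0) (@binit N)) /=;
  last by move=> f; rewrite inE => /and3P[].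
apply: eq_bigr => p Hp; rewrite -sum1_card; apply: eq_bigl => f; rewrite !inE /bacc /=.
by case: eqP => [->|_]; rewrite ?Hp ?eqxx ?andbT ?andbF ?andFb.
Qed.

Lemma odd_partition N w : brev N ->
  odd #|accs N w| = \big[addb/false]_(p | @binit N p) (0 < #|accs (Np N p) w|).
Proof.
move=> rN; rewrite card_partition (big_morph odd oddD (erefl : odd 0 = false)).
apply: eq_bigr => p _; have := card_start w p rN.
by case: #|_| => [|[|]].
Qed.

Lemma pos_partition N w :
  (0 < #|accs N w|) = \big[orb/false]_(p | @binit N p) (0 < #|accs (Np N p) w|).
Proof.
by rewrite card_partition (big_morph (fun n => 0 < n) addn_gt0 (erefl : (0 < 0) = false)).
Qed.

Lemma brev_Np N p : brev N -> brev (Np N p).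
Proof. by []. Qed.

Lemma OddL_ext (L L' : language Sigma) : (forall w, L w = L' w) -> OddL L -> OddL L'.
Proof. move=> E [N [rN HN]]; exists N; split=> // w; by rewrite -E. Qed.

Definition unitN (c : bool) := @BN unit (fun _ _ _ => true) (fun _ => c) (fun _ => true).

Lemma OddL_true : OddL (fun _ => true).
Proof.
exists (unitN true); split; first by split => [] [] [] [].
move=> w.
have -> : accs (unitN true) w = setT.
  apply/setP => f; rewrite !inE /bacc.
  rewrite (_ : brun f = true) //; by apply/forallP.
by rewrite cardsT card_ffun card_unit exp1n.
Qed.

Lemma OddL_false : OddL (fun _ => false).
Proof.
exists (unitN false); split; first by split => [] [] [] [].
move=> w.
have -> : accs (unitN false) w = set0.
  by apply/setP => f; rewrite !inE /bacc andbF.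
by rewrite cards0.
Qed.

Definition sumN (N1 N2 : bnfa) : bnfa :=
  @BN (bQ N1 + bQ N2)%type
   (fun x a y => match x, y with
      | inl p, inl q => bstep p a q | inr p, inr q => bstep p a q | _, _ => false end)
   (fun x => match x with inl p => binit p | inr p => binit p end)
   (fun x => match x with inl p => bfin p | inr p => bfin p end).

Definition liftl N1 N2 n (g : {ffun 'I_n -> bQ N1}) : {ffun 'I_n -> bQ (sumN N1 N2)} :=
  [ffun k => inl (g k)].
Definition liftr N1 N2 n (g : {ffun 'I_n -> bQ N2}) : {ffun 'I_n -> bQ (sumN N1 N2)} :=
  [ffun k => inr (g k)].
Arguments liftl : clear implicits.
Arguments liftr : clear implicits.

Lemma bacc_liftl N1 N2 w g : bacc (liftl N1 N2 (size w).+1 g) = bacc g.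
Proof.
rewrite /bacc /brun !ffunE; congr (_ && _).
by apply: eq_forallb => k; rewrite !ffunE.
Qed.

Lemma bacc_liftr N1 N2 w g : bacc (liftr N1 N2 (size w).+1 g) = bacc g.
Proof.
rewrite /bacc /brun !ffunE; congr (_ && _).
by apply: eq_forallb => k; rewrite !ffunE.
Qed.

Lemma sum_split N1 N2 w (f : {ffun 'I_(size w).+1 -> bQ (sumN N1 N2)}) : brun f ->
  (exists g, f = liftl N1 N2 _ g) \/ (exists g, f = liftr N1 N2 _ g).
Proof.
move=> /forallP Hr.
case E0: (f ord0) => [p|p]; [left|right].
- have H : forall k, k <= size w -> exists q, f (inord k) = inl q.
    elim=> [|k IH] hk; first by exists p; rewrite inord0.
    have [q Eq] := IH (ltnW hk).
    have := Hr (Ordinal hk); rewrite Eq.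
    by case: (f (inord k.+1)) => [q'|q'] // _; exists q'.
  exists [ffun k => match f k with inl q => q | inr _ => p end].
  apply/ffunP => k; rewrite !ffunE -(inord_val k).
  have [q ->] := H k (ltn_ord k); done.
- have H : forall k, k <= size w -> exists q, f (inord k) = inr q.
    elim=> [|k IH] hk; first by exists p; rewrite inord0.
    have [q Eq] := IH (ltnW hk).
    have := Hr (Ordinal hk); rewrite Eq.
    by case: (f (inord k.+1)) => [q'|q'] // _; exists q'.
  exists [ffun k => match f k with inr q => q | inl _ => p end].
  apply/ffunP => k; rewrite !ffunE -(inord_val k).
  have [q ->] := H k (ltn_ord k); done.
Qed.

Lemma card_sum N1 N2 w : #|accs (sumN N1 N2) w| = #|accs N1 w| + #|accs N2 w|.
Proof.
have linj : injective (liftl N1 N2 (size w).+1).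
  move=> g h /ffunP E; apply/ffunP => k; have := E k; rewrite !ffunE; by case.
have rinj : injective (liftr N1 N2 (size w).+1).
  move=> g h /ffunP E; apply/ffunP => k; have := E k; rewrite !ffunE; by case.
have -> : accs (sumN N1 N2) w =
  liftl N1 N2 _ @: accs N1 w :|: liftr N1 N2 _ @: accs N2 w.
  apply/setP => f; rewrite inE in_setU; apply/idP/orP.
  - move=> Hf; have := Hf; rewrite /bacc => /and3P [Hr _ _].
    case: (sum_split Hr) => [[g Eg]|[g Eg]]; rewrite Eg in Hf; [left|right];
      apply/imsetP; exists g => //; rewrite inE.
      by rewrite bacc_liftl in Hf.
    by rewrite bacc_liftr in Hf.
  - by case => /imsetP [g Hg ->]; rewrite ?bacc_liftl ?bacc_liftr; rewrite inE in Hg.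
rewrite cardsU.
have -> : liftl N1 N2 _ @: accs N1 w :&: liftr N1 N2 _ @: accs N2 w = set0.
  apply/setP => f; rewrite !inE; apply/negbTE/andP => [[/imsetP [g _ ->] /imsetP [h _ E]]].
  by move/ffunP: E => /(_ ord0); rewrite !ffunE.
by rewrite cards0 subn0 !card_imset.
Qed.

Lemma brev_sum N1 N2 : brev N1 -> brev N2 -> brev (sumN N1 N2).
Proof.
move=> [f1 b1] [f2 b2]; split.
- move=> [x|x] [y|y] [y'|y'] a H1 H2 //; first by rewrite (f1 _ _ _ _ H1 H2).
  by rewrite (f2 _ _ _ _ H1 H2).
- move=> [x|x] [x'|x'] [y|y] a H1 H2 //; first by rewrite (b1 _ _ _ _ H1 H2).
  by rewrite (b2 _ _ _ _ H1 H2).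
Qed.

Lemma OddL_xor L1 L2 : OddL L1 -> OddL L2 -> OddL (fun w => L1 w (+) L2 w).
Proof.
move=> [N1 [r1 H1]] [N2 [r2 H2]]; exists (sumN N1 N2); split; first exact: brev_sum.
by move=> w; rewrite card_sum oddD H1 H2.
Qed.

Definition prodN (N1 N2 : bnfa) : bnfa :=
  @BN (bQ N1 * bQ N2)%type
   (fun x a y => bstep x.1 a y.1 && bstep x.2 a y.2)
   (fun x => binit x.1 && binit x.2) (fun x => bfin x.1 && bfin x.2).

Definition pairf N1 N2 n (g : {ffun 'I_n -> bQ N1} * {ffun 'I_n -> bQ N2}) :
  {ffun 'I_n -> bQ (prodN N1 N2)} := [ffun k => (g.1 k, g.2 k)].
Arguments pairf : clear implicits.

Lemma bacc_pair N1 N2 w g :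
  bacc (pairf N1 N2 (size w).+1 g) = bacc g.1 && bacc g.2.
Proof.
rewrite /bacc /brun.
rewrite !ffunE.
rewrite (@eq_forallb _ _ (fun k : 'I_(size w) =>
   bstep (g.1 (inord k)) (tnth (in_tuple w) k) (g.1 (inord k.+1)) &&
   bstep (g.2 (inord k)) (tnth (in_tuple w) k) (g.2 (inord k.+1)))); last first.
  by move=> k; rewrite !ffunE.
rewrite forall_andb [binit _]/= [bfin _]/=.
by move: (binit _) (binit _) (bfin _) (bfin _) => [] [] [] [];
  rewrite ?andbT ?andbF ?andFb ?andTb.
Qed.

Lemma card_prod N1 N2 w : #|accs (prodN N1 N2) w| = #|accs N1 w| * #|accs N2 w|.
Proof.
have pinj : injective (pairf N1 N2 (size w).+1).
  move=> [g1 g2] [h1 h2] /ffunP E; congr pair; apply/ffunP => k; have := E k;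
    rewrite !ffunE; by case.
have -> : accs (prodN N1 N2) w = pairf N1 N2 _ @: setX (accs N1 w) (accs N2 w).
  apply/setP => f; rewrite inE; apply/idP/imsetP.
  - move=> Hf; exists ([ffun k => (f k).1], [ffun k => (f k).2]).
      rewrite inE !inE -bacc_pair.
      rewrite (_ : pairf _ _ _ _ = f) //.
      by apply/ffunP => k; rewrite !ffunE; case: (f k).
    by apply/ffunP => k; rewrite !ffunE; case: (f k).
  - move=> [g Hg ->]; rewrite bacc_pair; by rewrite !inE in Hg.
by rewrite card_imset // cardsX.
Qed.

Lemma brev_prod N1 N2 : brev N1 -> brev N2 -> brev (prodN N1 N2).
Proof.
move=> [f1 b1] [f2 b2]; split.
- move=> [x1 x2] [y1 y2] [z1 z2] a /andP [h1 h2] /andP [h1' h2'].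
  have := f1 _ _ _ _ h1 h1'; have := f2 _ _ _ _ h2 h2'; simpl; by move=> -> ->.
- move=> [x1 x2] [y1 y2] [z1 z2] a /andP [h1 h2] /andP [h1' h2'].
  have := b1 _ _ _ _ h1 h1'; have := b2 _ _ _ _ h2 h2'; simpl; by move=> -> ->.
Qed.

Lemma OddL_and L1 L2 : OddL L1 -> OddL L2 -> OddL (fun w => L1 w && L2 w).
Proof.
move=> [N1 [r1 H1]] [N2 [r2 H2]]; exists (prodN N1 N2); split; first exact: brev_prod.
by move=> w; rewrite card_prod oddM H1 H2.
Qed.

Lemma OddL_not L : OddL L -> OddL (fun w => ~~ L w).
Proof.
move=> H; apply: OddL_ext (OddL_xor H OddL_true) => w; by rewrite addbT.
Qed.

Lemma OddL_or L1 L2 : OddL L1 -> OddL L2 -> OddL (fun w => L1 w || L2 w).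
Proof.
move=> H1 H2; apply: OddL_ext (OddL_not (OddL_and (OddL_not H1) (OddL_not H2))) => w.
by rewrite -negb_or negbK.
Qed.

Lemma OddL_bigor (T : Type) (r : seq T) (P : pred T) (F : T -> language Sigma) :
  (forall p, OddL (F p)) -> OddL (fun w => \big[orb/false]_(p <- r | P p) F p w).
Proof.
move=> HF; elim: r => [|x r IH].
  by apply: OddL_ext OddL_false => w; rewrite big_nil.
case HP: (P x).
  by apply: OddL_ext (OddL_or (HF x) IH) => w; rewrite big_cons HP.
by apply: OddL_ext IH => w; rewrite big_cons HP.
Qed.

Lemma ExL_OddL L : ExL L -> OddL L.
Proof.
move=> [N [rN HL]].
apply: OddL_ext (OddL_bigor (index_enum (bQ N)) (@binit N)
        (F := fun p w => odd #|accs (Np N p) w|) _).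
  move=> w; rewrite HL pos_partition; apply: eq_bigr => p _.
  by have := card_start w p rN; case: #|_| => [|[|]].
move=> p; exists (Np N p); split => //.
Qed.

Lemma bc_ext (C : language Sigma -> Prop) (L L' : language Sigma) :
  (forall w, L w = L' w) -> bool_closure C L -> bool_closure C L'.
Proof.
by move=> E; rewrite (_ : L = L') //; apply: functional_extensionality.
Qed.

Lemma bc_xor (C : language Sigma -> Prop) L1 L2 : bool_closure C L1 -> bool_closure C L2 ->
  bool_closure C (fun w => L1 w (+) L2 w).
Proof.
move=> h1 h2.
apply: bc_ext (bc_union (bc_inter h1 (bc_compl h2)) (bc_inter (bc_compl h1) h2)).
by move=> w; case: (L1 w); case: (L2 w).
Qed.

Lemma bc_bigxor (C : language Sigma -> Prop) (T : Type) (r : seq T) (P : pred T) (F : T -> language Sigma) :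
  (forall p, bool_closure C (F p)) ->
  bool_closure C (fun w => \big[addb/false]_(p <- r | P p) F p w).
Proof.
move=> HF; elim: r => [|x r IH].
  by apply: bc_ext (@bc_empty Sigma C) => w; rewrite big_nil.
case HP: (P x).
  by apply: bc_ext (bc_xor (HF x) IH) => w; rewrite big_cons HP.
by apply: bc_ext IH => w; rewrite big_cons HP.
Qed.

Lemma OddL_bc L : OddL L -> bool_closure ExL L.
Proof.
move=> [N [rN HL]].
apply: bc_ext (bc_bigxor (index_enum (bQ N)) (@binit N)
        (F := fun p w => 0 < #|accs (Np N p) w|) _).
  by move=> w; rewrite HL odd_partition.
move=> p; apply: bc_base; exists (Np N p); split => //.
Qed.

Lemma bc_OddL L : bool_closure ExL L -> OddL L.
Proof.
elim=> {L}.
- move=> L; exact: ExL_OddL.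
- move=> L _; exact: OddL_not.
- exact: OddL_false.
- exact: OddL_true.
- move=> L1 L2 _ h1 _ h2; exact: OddL_or.
- move=> L1 L2 _ h1 _ h2; exact: OddL_and.
Qed.

End BNFA.

Section Bridge.
Variable Sigma : finType.
Local Open Scope ring_scope.

Definition ofF2 (A : wautomaton 'F_2 Sigma) : bnfa Sigma :=
  @BN Sigma (wa_Q A) (fun p a q => wa_sigma A p a q != 0)
    (fun q => wa_iota A q != 0) (fun q => wa_tau A q != 0).
Definition ofB (A : wautomaton bool Sigma) : bnfa Sigma :=
  @BN Sigma (wa_Q A) (fun p a q => wa_sigma A p a q != false)
    (fun q => wa_iota A q != false) (fun q => wa_tau A q != false).
Definition toF2 (N : bnfa Sigma) : wautomaton 'F_2 Sigma :=
  @WAut 'F_2 Sigma (bQ N) (fun p a q => (bstep p a q)%:R)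
    (fun q => (binit q)%:R) (fun q => (bfin q)%:R).
Definition toB (N : bnfa Sigma) : wautomaton bool Sigma :=
  @WAut bool Sigma (bQ N) (@bstep _ N) (@binit _ N) (@bfin _ N).

Lemma sumF2 (I : finType) (P Q : pred I) : (forall i, Q i -> P i) ->
  \big[(fun x y : 'F_2 => x + y)/0]_(i | P i) (Q i)%:R = #|[set i | Q i]|%:R.
Proof.
move=> QP.
change (\sum_(i | P i) (Q i)%:R = #|[set i | Q i]|%:R :> 'F_2).
rewrite -natr_sum -sum1_card; congr (_%:R).
rewrite big_mkcond [RHS]big_mkcond; apply: eq_bigr => i _; rewrite inE.
by case: (boolP (Q i)) => Hq; [rewrite QP | case: (P i)].
Qed.

Lemma behF2 (A : wautomaton 'F_2 Sigma) w :
  (behaviour (fun x y => x + y) (fun x y => x * y) 0 1 A w != 0)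
  = odd #|accs (ofF2 A) w|.
Proof.
rewrite /behaviour.
have E : forall f : {ffun 'I_(size w).+1 -> wa_Q A}, is_run 0 f ->
    run_weight (fun x y => x * y) 1 f = (bacc (N := ofF2 A) f)%:R.
  move=> f Hr; rewrite /run_weight.
  rewrite (_ : \big[_/_]_(k < size w) _ = 1); last first.
    apply: (big_ind (fun x => x = 1)) => //; first by move=> x y -> ->; rewrite mulr1.
    move=> k _; apply: F2ne0; by move/forallP: Hr => /(_ k).
  rewrite /bacc (_ : @brun _ (ofF2 A) w f = true); last exact: Hr.
  rewrite [binit _]/= [bfin _]/=.
  by case: (F2cases (wa_iota A (f ord0))) => ->; case: (F2cases (wa_tau A (f ord_max))) => ->;
    rewrite ?eqxx ?oner_eq0 ?mulr1 ?mul0r ?mulr0.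
rewrite (eq_bigr _ E) sumF2 ?F2nat //.
by move=> f /and3P [].
Qed.

Lemma behB (A : wautomaton bool Sigma) w :
  (behaviour orb andb false true A w != false) = (0 < #|accs (ofB A) w|)%N.
Proof.
rewrite /behaviour.
have E : forall f : {ffun 'I_(size w).+1 -> wa_Q A}, is_run false f ->
    run_weight andb true f = bacc (N := ofB A) f.
  move=> f Hr; rewrite /run_weight.
  rewrite (_ : \big[_/_]_(k < size w) _ = true); last first.
    apply: (big_ind (fun x => x = true)) => //; first by move=> x y -> ->.
    move=> k _; move/forallP: Hr => /(_ k); by case: (wa_sigma _ _ _ _).
  rewrite /bacc (_ : @brun _ (ofB A) w f = true); last exact: Hr.
  rewrite [binit _]/= [bfin _]/=.
  by case: (wa_iota A (f ord0)); case: (wa_tau A (f ord_max)).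
rewrite (eq_bigr _ E) big_orE card_gt0 (_ : forall b : bool, (b != false) = b) //; last by case.
apply/idP/idP => [/existsP [f /andP [_ Hf]] | /set0Pn [f Hf]].
  by apply/set0Pn; exists f; rewrite inE.
apply/existsP; exists f; rewrite inE in Hf; rewrite Hf andbT.
by case/and3P: Hf.
Qed.

Lemma nfb (b : bool) : (b != false) = b. Proof. by case: b. Qed.

Lemma F2_OddL (L : language Sigma) : RevL_F2 L <-> OddL L.
Proof.
split.
  move=> [A [rA HL]]; exists (ofF2 A); split; first exact: rA.
  by move=> w; rewrite HL behF2.
move=> [N [[rf rb] HL]]; exists (toF2 N); split.
  split.
    by move=> p q q' a; rewrite /= !F2b; exact: rf.
  by move=> p p' q a; rewrite /= !F2b; exact: rb.
move=> w; rewrite behF2 HL; congr odd; apply: eq_card => f; rewrite !inE /bacc.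
congr andb; first by rewrite /brun; apply: eq_forallb => k; simpl bstep; rewrite F2b.
by simpl binit; simpl bfin; rewrite !F2b.
Qed.

Lemma B_ExL (L : language Sigma) : RevL_B L <-> ExL L.
Proof.
split.
  move=> [A [rA HL]]; exists (ofB A); split; first exact: rA.
  by move=> w; rewrite HL behB.
move=> [N [[rf rb] HL]]; exists (toB N); split.
  split.
    by move=> p q q' a; rewrite /= !nfb; exact: rf.
  by move=> p p' q a; rewrite /= !nfb; exact: rb.
move=> w; rewrite behB HL; congr (0 < _)%N; apply: eq_card => f; rewrite !inE /bacc.
congr andb; first by rewrite /brun; apply: eq_forallb => k; simpl bstep; rewrite nfb.
by simpl binit; simpl bfin; rewrite !nfb.
Qed.

End Bridge.

Lemma bc_mono (Sigma : finType) (C C' : language Sigma -> Prop) L :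
  (forall L, C L -> C' L) -> bool_closure C L -> bool_closure C' L.
Proof.
move=> H; elim=> {L}.
- move=> L hL; apply: bc_base; exact: H.
- move=> L _ h; exact: bc_compl.
- exact: bc_empty.
- exact: bc_full.
- move=> L1 L2 _ h1 _ h2; exact: bc_union.
- move=> L1 L2 _ h1 _ h2; exact: bc_inter.
Qed.

Theorem theorem1 (Sigma : finType) (HSigma : 0 < #|Sigma|) (L : language Sigma) :
  RevL_F2 L <-> bool_closure (@RevL_B Sigma) L.
Proof.
split.
  move=> /F2_OddL /OddL_bc; apply: bc_mono => L' /B_ExL; done.
move=> h; apply/F2_OddL; apply: bc_OddL; apply: bc_mono h => L' /B_ExL; done.
Qed.
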